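(* Let $D$ be a tournament and $T\subseteq V(D)$. Suppose an arc $e\in A(D)$ is contained in some minimum-size $T$-feedback arc set of $D$, and let $D'$ be the tournament obtained from $D$ by reversing the arc $e$. Then for every arc set $S$ with $e\in S$: $S$ is a minimum $T$-feedback arc set of $D$ if and only if $S\setminus\{e\}$ is a minimum $T$-feedback arc set of $D'$.
   Context: A $T$-cycle is a directed cycle containing at least one vertex of $T$. A $T$-feedback arc set of a digraph $D$ is a set $S\subseteq A(D)$ such that $D-S$ contains no $T$-cycle; it is minimum if it has the smallest possible size. *)

(* Defs.v *)
From mathcomp Require Import all_boot.
Set Implicit Arguments. Unset Strict Implicit. Unset Printing Implicit Defensive.

Definition arcs (V : finType) (D : rel V) : {set V * V} :=
  [set p | D p.1 p.2].

Definition tournament (V : finType) (D : rel V) : Prop :=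
  (forall x, ~~ D x x) /\
  (forall x y, x != y -> (D x y (+) D y x)).

Definition del_arcs (V : finType) (D : rel V) (S : {set V * V}) : rel V :=
  fun x y => D x y && ((x, y) \notin S).

(* A directed cycle: a nonempty sequence of distinct vertices
   c = [v0; ...; v_{k-1}] with arcs v_i -> v_{i+1} and v_{k-1} -> v0. *)
Definition dicycle (V : finType) (D : rel V) (c : seq V) : bool :=
  [&& c != [::], uniq c & cycle D c].

Definition Tcycle (V : finType) (D : rel V) (T : {set V}) (c : seq V) : bool :=
  dicycle D c && has (mem T) c.

Definition T_fas (V : finType) (D : rel V) (T : {set V}) (S : {set V * V}) : Prop :=
  S \subset arcs D /\ forall c, ~~ Tcycle (del_arcs D S) T c.

Definition min_T_fas (V : finType) (D : rel V) (T : {set V}) (S : {set V * V}) : Prop :=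
  T_fas D T S /\ forall S', T_fas D T S' -> #|S| <= #|S'|.

Definition reverse_arc (V : finType) (D : rel V) (e : V * V) : rel V :=
  fun x y => if (x, y) == (e.2, e.1) then true
             else if (x, y) == e then false else D x y.

(* Main.v *)
Require Import Defs.
From mathcomp Require Import all_boot.
From mathcomp Require Import zify.
Set Implicit Arguments. Unset Strict Implicit. Unset Printing Implicit Defensive.

Definition hasTc (V : finType) (G : rel V) (T : {set V}) :=
  [exists t, exists y, [&& t \in T, G t y & connect G y t]].

Lemma Tc_build (V : finType) (G : rel V) (T : {set V}) t y :
  t \in T -> G t y -> connect G y t -> exists c, Tcycle G T c.
Proof.
move=> tT Gty /connectP[p Gp lt].
move: lt; case: (shortenP Gp) => p' Gp' U _ lt.
exists (y :: p').
rewrite /Tcycle /dicycle U /= rcons_path Gp' -lt Gty /=.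
change (has (mem T) (y :: p')).
apply/hasP; exists t => //; rewrite lt; exact: mem_last.
Qed.

Lemma Tc_extract (V : finType) (G : rel V) (T : {set V}) c :
  Tcycle G T c -> hasTc G T.
Proof.
move=> /andP[/and3P[c0 U cy] /hasP[t tc tT0]].
have tT : t \in T := tT0.
case: (rot_to tc) => i s' ec.
have: cycle G (t :: s') by rewrite -ec rot_cycle.
case: s' {ec} => [|y s'] /=.
  rewrite andbT => Gtt; apply/existsP; exists t; apply/existsP; exists t.
  by rewrite tT Gtt connect0.
move=> /andP[Gty pys]; apply/existsP; exists t; apply/existsP; exists y.
rewrite tT Gty /=; apply/connectP; exists (rcons s' t) => //.
by rewrite last_rcons.
Qed.

Lemma noTcP (V : finType) (G : rel V) (T : {set V}) :
  (forall c, ~~ Tcycle G T c) <-> ~~ hasTc G T.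
Proof.
split.
  move=> H; apply/negP => /existsP[t /existsP[y /and3P[tT Gty cyt]]].
  have [c Hc] := Tc_build tT Gty cyt.
  by move: (H c); rewrite Hc.
move=> H c; apply/negP => /Tc_extract; exact/negP.
Qed.

Lemma hasTc_sub (V : finType) (G H : rel V) (T : {set V}) :
  subrel G H -> hasTc G T -> hasTc H T.
Proof.
move=> sGH /existsP[t /existsP[y /and3P[tT Gty cyt]]].
apply/existsP; exists t; apply/existsP; exists y.
rewrite tT (sGH _ _ Gty) /=.
by apply: (connect_sub _ cyt) => a b /sGH /connect1.
Qed.

Lemma connect_add (V : finType) (G G' : rel V) a b x z :
  (forall p q, G' p q -> G p q \/ (p = a /\ q = b)) ->
  connect G' x z -> connect G x z \/ (connect G x a /\ connect G b z).
Proof.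
move=> hG /connectP[p Gp ->]; elim: p x Gp => [|w p IH] x /=.
  by left; exact: connect0.
move=> /andP[Gxw Gp]; have IHw := IH _ Gp.
case: (hG _ _ Gxw) => [Gxw'|[ex ew]].
  case: IHw => [h|[h1 h2]].
    by left; exact: connect_trans (connect1 Gxw') h.
  by right; split => //; exact: connect_trans (connect1 Gxw') h1.
subst x w; right; split; first exact: connect0.
by case: IHw => [h|[h1 h2]].
Qed.

Lemma connect_ne (V : finType) (G : rel V) x z :
  connect G x z -> x != z -> exists y, G x y && connect G y z.
Proof.
move=> /connectP[[|w p] /= Gp ->]; first by rewrite eqxx.
move: Gp => /andP[Gxw Gp] _; exists w; rewrite Gxw /=.
by apply/connectP; exists p.
Qed.

Lemma lemmaA (V : finType) (D : rel V) (T : {set V}) (u v : V) (S : {set V * V}) :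
  tournament D -> min_T_fas D T S -> (u, v) \in S ->
  T_fas (reverse_arc D (u, v)) T (S :\ (u, v)).
Proof.
move=> [loop tour] [[SA noS] minS] eS.
have Duv : D u v by move: (subsetP SA _ eS); rewrite inE.
have uv : u != v by apply/negP => /eqP ue; move: (loop u); rewrite {2}ue Duv.
have Dvu : ~~ D v u by move: (tour _ _ uv); rewrite Duv.
split.
  apply/subsetP => [[x y]]; rewrite !inE /= => /andP[ne xyS].
  move: (subsetP SA _ xyS); rewrite inE /= => Dxy.
  rewrite /reverse_arc /= (negbTE ne); by case: ifP.
apply/noTcP/negP => H2.
set G := del_arcs D S.
have noG : ~~ hasTc G T by apply/noTcP.
set G1 := del_arcs D (S :\ (u, v)).
have H1 : hasTc G1 T.
  case H: (hasTc G1 T) => //.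
  have nc := proj2 (noTcP G1 T) (negbT H).
  have : #|S| <= #|S :\ (u,v)|.
    apply: minS; split => //; apply: subset_trans SA; exact: subsetDl.
  by rewrite (cardsD1 (u,v) S) eS /= add1n ltnn.
have e1 : forall p q, G1 p q -> G p q \/ (p = u /\ q = v).
  move=> p q; rewrite /G1 /G /del_arcs !inE.
  case: (eqVneq (p, q) (u, v)) => [[-> ->]|ne]; first by right.
  by rewrite /= => ->; left.
have e2 : forall p q, (del_arcs (reverse_arc D (u, v)) (S :\ (u, v))) p q ->
    G p q \/ (p = v /\ q = u).
  move=> p q; rewrite /G /del_arcs /reverse_arc !inE /=.
  case: (eqVneq (p, q) (v, u)) => [[-> ->]|ne]; first by right.
  case: (eqVneq (p, q) (u, v)) => [//|ne2] /=.
  by move=> ->; left.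
have contra : forall t y, t \in T -> G t y -> connect G y t -> False.
  move=> t y tT Gty cyt; move/negP: noG; apply; apply/existsP; exists t.
  by apply/existsP; exists y; rewrite tT Gty.
have [t' t'T [cvt ct'u]] : exists2 t', t' \in T & connect G v t' /\ connect G t' u.
  move: H1 => /existsP[t /existsP[y /and3P[tT G1ty cyt]]].
  case: (e1 _ _ G1ty) => [Gty|[et ey]].
    case: (connect_add e1 cyt) => [h|[h1 h2]]; first by case: (contra _ _ tT Gty h).
    by exists t => //; split => //; exact: connect_trans (connect1 Gty) h1.
  subst t y; exists u => //; split; last exact: connect0.
  by case: (connect_add e1 cyt) => [h|[h1 h2]].
move: H2 => /existsP[t /existsP[y /and3P[tT G2ty cyt]]].
case: (e2 _ _ G2ty) => [Gty|[et ey]].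
  case: (connect_add e2 cyt) => [h|[h1 h2]]; first by case: (contra _ _ tT Gty h).
  apply: (contra _ _ tT Gty).
  apply: connect_trans h1 _; apply: connect_trans cvt _; exact: connect_trans ct'u h2.
subst t y.
have cuv : connect G u v by case: (connect_add e2 cyt) => [h|[h1 h2]].
have cvu : connect G v u by exact: connect_trans cvt ct'u.
have vu : v != u by rewrite eq_sym.
have [y0 /andP[Gvy0 cy0u]] := connect_ne cvu vu.
apply: (contra _ _ tT Gvy0); exact: connect_trans cy0u cuv.
Qed.

Theorem proposition2 (V : finType) (D : rel V) (T : {set V}) (e : V * V) :
  tournament D ->
  (exists S0 : {set V * V}, min_T_fas D T S0 /\ e \in S0) ->
  forall S : {set V * V}, S \subset arcs D -> e \in S ->
    (min_T_fas D T S <-> min_T_fas (reverse_arc D e) T (S :\ e)).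
Proof.
case: e => u v tourD [S0 [minS0 eS0]] S SA eS.
have [loop tour] := tourD.
have Duv : D u v by move: (subsetP SA _ eS); rewrite inE.
have uv : u != v by apply/negP => /eqP ue; move: (loop u); rewrite {2}ue Duv.
have Dvu : ~~ D v u by move: (tour _ _ uv); rewrite Duv.
split.
  move=> minS; split; first exact: lemmaA minS eS.
  move=> R [RA noR].
  set R' := (u, v) |: (R :\ (v, u)).
  have : #|S| <= #|R'|.
    apply: minS.2; split.
      apply/subsetP => [[x y]]; rewrite !inE /=.
      case/orP => [/eqP[-> ->] //|/andP[ne xyR]].
      move: (subsetP RA _ xyR); rewrite inE /reverse_arc /= (negbTE ne).
      by case: ifP.
    have sub : subrel (del_arcs D R') (del_arcs (reverse_arc D (u, v)) R).
      move=> x y; rewrite /del_arcs /reverse_arc /R' !inE /=.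
      case: (eqVneq (x, y) (u, v)) => [_|ne1] /=; first by rewrite andbF.
      case: (eqVneq (x, y) (v, u)) => [[-> ->]|ne2] /=; first by rewrite (negbTE Dvu).
      by [].
    move=> c; apply/negP => /Tc_extract /(hasTc_sub sub).
    by rewrite (negbTE (proj1 (noTcP _ _) noR)).
  rewrite /R' cardsU1 (cardsD1 (u,v) S) eS.
  rewrite [#|R|](cardsD1 (v, u) R) /=.
  set a := #|S :\ (u, v)|; set b := #|R :\ (v, u)|.
  case: (_ \notin _); case: ((v,u) \in R) => /=; lia.
move=> [[SA' noS'] minS']; split.
  have sub : subrel (del_arcs D S) (del_arcs (reverse_arc D (u, v)) (S :\ (u, v))).
    move=> x y; rewrite /del_arcs /reverse_arc !inE /=.
    case: (eqVneq (x, y) (u, v)) => [[-> ->]|ne1] /=; first by rewrite eS andbF.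
    case: (eqVneq (x, y) (v, u)) => [[-> ->]|ne2] /=; first by rewrite (negbTE Dvu).
    by [].
  split => // c; apply/negP => /Tc_extract /(hasTc_sub sub).
  by rewrite (negbTE (proj1 (noTcP _ _) noS')).
move=> R fR.
have h0 := minS' _ (lemmaA tourD minS0 eS0).
have h1 := minS0.2 _ fR.
move: h0 h1; rewrite (cardsD1 (u,v) S) (cardsD1 (u,v) S0) eS eS0 /=.
set a := #|S :\ (u, v)|; set b := #|S0 :\ (u, v)|; lia.
Qed.
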